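(* Let $\bar z$ be a feasible point of the MPCC $$\min f(z)\ \text{ s.t. }\ g(z)\le 0,\ h(z)=0,\ 0\le G(z)\perp H(z)\ge 0,$$ where $f:\mathbb{R}^n\to\mathbb{R}$, $g:\mathbb{R}^n\to\mathbb{R}^{n_g}$, $h:\mathbb{R}^n\to\mathbb{R}^{n_h}$, $G,H:\mathbb{R}^n\to\mathbb{R}^m$ are differentiable. If $\bar z$ is piecewise M-stationary, then $\bar z$ is B-stationary.
   Context: The complementarity constraint $0\le G(z)\perp H(z)\ge 0$ means $G(z)\ge0$, $H(z)\ge 0$, $G_i(z)H_i(z)=0$ for all $i$. At a feasible $\bar z$ define $\alpha(\bar z)=\{i: G_i(\bar z)=0<H_i(\bar z)\}$, $\gamma(\bar z)=\{i: G_i(\bar z)>0=H_i(\bar z)\}$, $\beta(\bar z)=\{i: G_i(\bar z)=0=H_i(\bar z)\}$. Let $\mathcal T(\bar z)$ be the (Bouligand) tangent cone of the MPCC feasible set at $\bar z$. $\bar z$ is B-stationary if $\nabla f(\bar z)^Td\ge 0$ for all $d\in\mathcal T(\bar z)$. Piecewise M-stationarity: let $\mathcal P(\beta(\bar z))$ be the set of all pairs $(\beta_1,\beta_2)$ with $\beta_1\cup\beta_2=\beta(\bar z)$, $\beta_1\cap\beta_2=\emptyset$. $\bar z$ is piecewise M-stationary if for every $(\beta_1,\beta_2)\in\mathcal P(\beta(\bar z))$ there exist multipliers $\bar\lambda=(\bar\lambda^g,\bar\lambda^h,\bar\lambda^G,\bar\lambda^H)$ (possibly depending on the partition) with $$0=\nabla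 f(\bar z)+\sum_{i=1}^{n_g}\bar\lambda^g_i\nabla g_i(\bar z)+\sum_{i=1}^{n_h}\bar\lambda^h_i\nabla h_i(\bar z)-\sum_{i\in\alpha(\bar z)\cup\beta(\bar z)}\bar\lambda^G_i\nabla G_i(\bar z)-\sum_{i\in\gamma(\bar z)\cup\beta(\bar z)}\bar\lambda^H_i\nabla H_i(\bar z),$$ $\bar\lambda^g_i\ge0$ and $\bar\lambda^g_ig_i(\bar z)=0$ for all $i$; $\bar\lambda^H_i\ge 0$ for $i\in\beta_1$; $\bar\lambda^G_i\ge0$ for $i\in\beta_2$; and for every $i\in\beta(\bar z)$ either $\bar\lambda^G_i,\bar\lambda^H_i\ge 0$ or $\bar\lambda^G_i\bar\lambda^H_i=0$. *)

(* Defs.v *)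
From HB Require Import structures.
From mathcomp Require Import all_boot all_order all_algebra.
From mathcomp Require Import all_classical all_reals all_analysis.
Set Implicit Arguments. Unset Strict Implicit. Unset Printing Implicit Defensive.
Import Order.TTheory GRing.Theory Num.Theory.
Import numFieldNormedType.Exports.
Local Open Scope classical_set_scope.
Local Open Scope ring_scope.

Section MPCC.
Variable R : realType.
Variable n : nat.

Definition grad (f : 'rV[R]_n -> R) (z : 'rV[R]_n) : 'rV[R]_n :=
  \row_(j < n) ('d f z (delta_mx 0 j : 'rV[R]_n)).

Definition dotv (u v : 'rV[R]_n) : R := \sum_(j < n) u 0 j * v 0 j.

Definition tangent_cone (S : set 'rV[R]_n) (z : 'rV[R]_n) : set 'rV[R]_n :=
  [set d | exists (t : R^nat) (dk : nat -> 'rV[R]_n),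
      (forall k, 0 < t k) /\ t @ \oo --> (0 : R) /\ dk @ \oo --> d /\
      (forall k, S (z + t k *: dk k))].

Variables (ng nh m : nat).
Variables (g : 'I_ng -> 'rV[R]_n -> R) (h : 'I_nh -> 'rV[R]_n -> R)
          (G H : 'I_m -> 'rV[R]_n -> R).

Definition mpcc_feasible : set 'rV[R]_n :=
  [set z | (forall i, g i z <= 0) /\ (forall i, h i z = 0) /\
           (forall i, 0 <= G i z /\ 0 <= H i z /\ G i z * H i z = 0)].

Definition alpha_set (z : 'rV[R]_n) : {set 'I_m} :=
  [set i | (G i z == 0) && (0 < H i z)].
Definition gamma_set (z : 'rV[R]_n) : {set 'I_m} :=
  [set i | (0 < G i z) && (H i z == 0)].
Definition beta_set (z : 'rV[R]_n) : {set 'I_m} :=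
  [set i | (G i z == 0) && (H i z == 0)].

Definition B_stationary (f : 'rV[R]_n -> R) (z : 'rV[R]_n) : Prop :=
  forall d, tangent_cone mpcc_feasible z d -> 0 <= dotv (grad f z) d.

Definition piecewise_M_stationary (f : 'rV[R]_n -> R) (z : 'rV[R]_n) : Prop :=
  forall beta1 beta2 : {set 'I_m},
    beta1 :|: beta2 = beta_set z -> beta1 :&: beta2 = finset.set0 ->
    exists (lg : 'I_ng -> R) (lh : 'I_nh -> R) (lG lH : 'I_m -> R),
      [/\ grad f z
          + \sum_(i < ng) lg i *: grad (g i) z
          + \sum_(i < nh) lh i *: grad (h i) z
          - \sum_(i in alpha_set z :|: beta_set z) lG i *: grad (G i) z
          - \sum_(i in gamma_set z :|: beta_set z) lH i *: grad (H i) z = 0,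
        (forall i, 0 <= lg i /\ lg i * g i z = 0),
        (forall i, i \in beta1 -> 0 <= lH i),
        (forall i, i \in beta2 -> 0 <= lG i) &
        (forall i, i \in beta_set z ->
           (0 <= lG i /\ 0 <= lH i) \/ lG i * lH i = 0)].

End MPCC.

(* Main.v *)
Require Import Defs.
From HB Require Import structures.
From mathcomp Require Import all_boot all_order all_algebra.
From mathcomp Require Import all_classical all_reals all_analysis.
From mathcomp Require Import ring lra.
Import Order.TTheory GRing.Theory Num.Theory.
Import numFieldNormedType.Exports.
Local Open Scope classical_set_scope.
Local Open Scope ring_scope.

Lemma dir_lim (R : realType) (V : normedModType R) (phi : V -> R) (z d : V)
  (t : R^nat) (dk : nat -> V) :
  differentiable phi z -> (forall k, 0 < t k) -> t @ \oo --> (0:R) -> dk @ \oo --> d ->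
  (fun k => (phi (z + t k *: dk k) - phi z) / t k) @ \oo --> 'd phi z d.
Proof.
move=> Hd tpos t0 dkd.
have Ho := diff_locally Hd.
move/eqaddoP: Ho => Ho.
have dc : {for d, continuous ('d phi z)} by apply: diff_continuous.
have E : forall k, (phi (z + t k *: dk k) - phi z) / t k =
   'd phi z (dk k) + (phi (t k *: dk k + z) - (phi z + 'd phi z (t k *: dk k))) / t k.
  move=> k; rewrite linearZ /= addrC.
  have tk0 : t k != 0 by rewrite gt_eqF.
  rewrite [t k *: dk k + z]addrC.
  set a := 'd phi z (dk k); set b := phi (z + _).
  change (t k *: a) with (t k * a).
  by field.
have -> : (fun k => (phi (z + t k *: dk k) - phi z) / t k) =
   (fun k => 'd phi z (dk k) +
    (phi (t k *: dk k + z) - (phi z + 'd phi z (t k *: dk k))) / t k).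
  by apply/funext => k; rewrite E.
rewrite -[X in _ --> X]addr0; apply: cvgD.
  exact: (cvg_comp _ _ dkd dc).
have htd : (fun k => t k *: dk k) @ \oo --> (0 : V).
  rewrite -(scale0r d); exact: cvgZ.
set M := `|d| + 1.
have M0 : 0 < M by rewrite /M ltr_wpDl.
have hd : \forall k \near \oo, `|dk k| <= M.
  move/cvgrPdist_le: dkd => /(_ 1 ltr01); apply: filterS => k hk.
  have := ler_normB d (d - dk k); rewrite subKr /M => h1.
  by apply: (le_trans h1); rewrite lerD2l.
apply/cvgr0Pnorm_le => eps eps0.
have epsM0 : 0 < eps / M by rewrite divr_gt0.
have H1 : \forall k \near \oo, `|phi (t k *: dk k + z) - (phi z + 'd phi z (t k *: dk k))|
     <= eps / M * `|t k *: dk k|.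
  exact: (htd _ (Ho _ epsM0)).
near=> k.
have Hk : `|phi (t k *: dk k + z) - (phi z + 'd phi z (t k *: dk k))|
     <= eps / M * `|t k *: dk k| by near: k.
have Hk2 : `|dk k| <= M by near: k.
have tk0 := tpos k.
rewrite normrM normfV (gtr0_norm tk0) ler_pdivrMr // .
apply: (le_trans Hk); rewrite normrZ (gtr0_norm tk0).
have h3 : eps / M * `|dk k| <= eps.
  rewrite mulrAC ler_pdivrMr //; nra.
rewrite mulrCA [eps * _]mulrC; nra.
Unshelve. all: by end_near.
Qed.

Lemma lim_le_ev {R : realType} {u : R^nat} {l : R} (c : R) :
  u @ \oo --> l -> (\forall k \near \oo, u k <= c) -> l <= c.
Proof. move=> ul H; exact: (ler_cvg_to ul (cvg_cst c)). Qed.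

Lemma lim_ge_ev {R : realType} {u : R^nat} {l : R} (c : R) :
  u @ \oo --> l -> (\forall k \near \oo, c <= u k) -> c <= l.
Proof. move=> ul H; exact: (ler_cvg_to (cvg_cst c) ul). Qed.

Lemma lim_eq_ev {R : realType} {u : R^nat} {l : R} (c : R) :
  u @ \oo --> l -> (\forall k \near \oo, u k = c) -> l = c.
Proof.
move=> ul H; apply/eqP; rewrite eq_le (lim_le_ev _ ul) ?(lim_ge_ev _ ul) //;
  by apply: filterS H => k ->.
Qed.

Lemma grad_dotv (R : realType) (n : nat) (f : 'rV[R]_n -> R) z d :
  dotv (grad f z) d = 'd f z d.
Proof.
rewrite /dotv /grad {2}(row_sum_delta d) linear_sum /=.
apply: eq_bigr => j _; rewrite mxE linearZ /= mulrC //.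
Qed.

Lemma dotvD (R : realType) (n : nat) (u v d : 'rV[R]_n) :
  dotv (u + v) d = dotv u d + dotv v d.
Proof. by rewrite /dotv -big_split /=; apply: eq_bigr => j _; rewrite mxE mulrDl. Qed.

Lemma dotvN (R : realType) (n : nat) (u d : 'rV[R]_n) :
  dotv (- u) d = - dotv u d.
Proof. by rewrite /dotv -sumrN; apply: eq_bigr => j _; rewrite mxE mulNr. Qed.

Lemma dotvZ (R : realType) (n : nat) (a : R) (u d : 'rV[R]_n) :
  dotv (a *: u) d = a * dotv u d.
Proof. by rewrite /dotv mulr_sumr; apply: eq_bigr => j _; rewrite mxE mulrA. Qed.

Lemma dotv0 (R : realType) (n : nat) (d : 'rV[R]_n) : dotv 0 d = 0.
Proof. by rewrite /dotv big1 // => j _; rewrite mxE mul0r. Qed.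

Lemma dotv_sum (R : realType) (n : nat) (I : finType) (P : pred I) (F : I -> 'rV[R]_n) d :
  dotv (\sum_(i | P i) F i) d = \sum_(i | P i) dotv (F i) d.
Proof. by apply: (big_morph (fun u => dotv u d)) => [u v|]; rewrite ?dotvD ?dotv0. Qed.

Lemma dot_eq0 (R : realType) (n : nat) (d u a b c e : 'rV[R]_n) :
  u + a + b - c - e = 0 ->
  dotv u d + dotv a d + dotv b d - dotv c d - dotv e d = 0.
Proof. by move=> E; rewrite -!dotvN -!dotvD E dotv0. Qed.

Lemma final_ineq {R : realType} {a b c e x : R} :
  a + b + c - e - x = 0 -> b <= 0 -> c = 0 -> 0 <= e -> 0 <= x -> 0 <= a.
Proof. by move=> *; lra. Qed.

Lemma combo_eq {R : realType} {a b c e x a' b' c' e' x' : R} :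
  a = a' -> b = b' -> c = c' -> e = e' -> x = x' ->
  a + b + c - e - x = 0 -> a' + b' + c' - e' - x' = 0.
Proof. by move=> -> -> -> -> ->. Qed.

Lemma dsum {R : realType} {n : nat} {I : finType} {P : pred I} (c : I -> R)
  (phi : I -> 'rV[R]_n -> R) z d :
  dotv (\sum_(i | P i) c i *: grad (phi i) z) d = \sum_(i | P i) c i * 'd (phi i) z d.
Proof. by rewrite dotv_sum; apply: eq_bigr => i _; rewrite dotvZ grad_dotv. Qed.

Theorem theorem2p3 (R : realType) (n ng nh m : nat)
  (f : 'rV[R]_n -> R) (g : 'I_ng -> 'rV[R]_n -> R) (h : 'I_nh -> 'rV[R]_n -> R)
  (G H : 'I_m -> 'rV[R]_n -> R) (zbar : 'rV[R]_n) :
  (forall z, differentiable f z) ->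
  (forall i z, differentiable (g i) z) ->
  (forall i z, differentiable (h i) z) ->
  (forall i z, differentiable (G i) z) ->
  (forall i z, differentiable (H i) z) ->
  mpcc_feasible g h G H zbar ->
  piecewise_M_stationary g h G H f zbar ->
  B_stationary g h G H f zbar.
Proof.
move=> Hf Hg Hh HG HH [fg [fh fGH]] PM d [t [dk [tpos [t0 [dkd Sk]]]]].
have L : forall phi : 'rV[R]_n -> R, (forall z, differentiable phi z) ->
   (fun k => (phi (zbar + t k *: dk k) - phi zbar) / t k) @ \oo --> 'd phi zbar d.
  by move=> phi Hphi; exact: dir_lim (Hphi zbar) tpos t0 dkd.
have zk : (fun k => zbar + t k *: dk k) @ \oo --> zbar.
  rewrite -[X in _ --> X]addr0; apply: cvgD; first exact: cvg_cst.
  rewrite -(scale0r d); exact: cvgZ.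
have Dg : forall i, g i zbar = 0 -> 'd (g i) zbar d <= 0.
  move=> i g0; apply: (lim_le_ev 0 (L _ (Hg i))); apply: nearW => k.
  have [gk _] := Sk k; rewrite g0 subr0.
  by apply: mulr_le0_ge0 => //; rewrite invr_ge0 ltW.
have Dh : forall i, 'd (h i) zbar d = 0.
  move=> i; apply: (lim_eq_ev 0 (L _ (Hh i))); apply: nearW => k.
  have [_ [hk _]] := Sk k; by rewrite hk fh subr0 mul0r.
have DGge : forall i, G i zbar = 0 -> 0 <= 'd (G i) zbar d.
  move=> i g0; apply: (lim_ge_ev 0 (L _ (HG i))); apply: nearW => k.
  have [_ [_ Gk]] := Sk k; have [Gk0 _] := Gk i; rewrite g0 subr0.
  by apply: divr_ge0 => //; rewrite ltW.
have DHge : forall i, H i zbar = 0 -> 0 <= 'd (H i) zbar d.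
  move=> i g0; apply: (lim_ge_ev 0 (L _ (HH i))); apply: nearW => k.
  have [_ [_ Gk]] := Sk k; have [_ [Hk0 _]] := Gk i; rewrite g0 subr0.
  by apply: divr_ge0 => //; rewrite ltW.
have DGa : forall i, G i zbar = 0 -> 0 < H i zbar -> 'd (G i) zbar d = 0.
  move=> i g0 hpos; apply: (lim_eq_ev 0 (L _ (HG i))).
  have := @cvgr_gt R _ _ _ _ _ (cvg_comp _ _ zk (differentiable_continuous (HH i zbar))) 0 hpos.
  move=> HE; near=> k; have Hk : 0 < H i (zbar + t k *: dk k) by near: k; exact: HE.
  have [_ [_ Gk]] := Sk k; have [_ [_ GHk]] := Gk i.
  move/eqP: GHk; rewrite mulf_eq0 (gt_eqF Hk) orbF => /eqP ->.
  by rewrite g0 subr0 mul0r.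
have DHg : forall i, 0 < G i zbar -> H i zbar = 0 -> 'd (H i) zbar d = 0.
  move=> i gpos h0; apply: (lim_eq_ev 0 (L _ (HH i))).
  have := @cvgr_gt R _ _ _ _ _ (cvg_comp _ _ zk (differentiable_continuous (HG i zbar))) 0 gpos.
  move=> HE; near=> k; have Gk' : 0 < G i (zbar + t k *: dk k) by near: k; exact: HE.
  have [_ [_ Gk]] := Sk k; have [_ [_ GHk]] := Gk i.
  move/eqP: GHk; rewrite mulf_eq0 (gt_eqF Gk') /= => /eqP ->.
  by rewrite h0 subr0 mul0r.
have DGH : forall i, G i zbar = 0 -> H i zbar = 0 ->
    'd (G i) zbar d * 'd (H i) zbar d = 0.
  move=> i g0 h0; apply: (lim_eq_ev 0 (cvgM (L _ (HG i)) (L _ (HH i)))).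
  apply: nearW => k /=.
  have [_ [_ Gk]] := Sk k; have [_ [_ GHk]] := Gk i.
  by rewrite g0 h0 !subr0 mulrACA GHk mul0r.
pose b1 := [set i in beta_set G H zbar | 'd (G i) zbar d == 0].
pose b2 := [set i in beta_set G H zbar | 'd (G i) zbar d != 0].
have U : b1 :|: b2 = beta_set G H zbar.
  by apply/setP => i; rewrite !inE; case: (G i zbar == 0); case: (H i zbar == 0); case: ('d (G i) zbar d == 0).
have I : b1 :&: b2 = finset.set0.
  by apply/setP => i; rewrite !inE; case: (G i zbar == 0); case: (H i zbar == 0); case: ('d (G i) zbar d == 0).
have [lg [lh [lG [lH [Heq Hlg Hb1 Hb2 _]]]]] := PM b1 b2 U I.
have E := combo_eq (grad_dotv _ _ f zbar d) (dsum lg g zbar d) (dsum lh h zbar d)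
  (dsum lG G zbar d) (dsum lH H zbar d) (@dot_eq0 R n d _ _ _ _ _ Heq).
rewrite (grad_dotv _ _ f zbar d).
have Sg : \sum_(i < ng) lg i * 'd (g i) zbar d <= 0.
  rewrite -oppr_ge0 -sumrN; apply: sumr_ge0 => i _; rewrite -mulrN.
  have [lg0 lgg] := Hlg i.
  case: (eqVneq (g i zbar) 0) => [g0|gn0].
    by apply: mulr_ge0 => //; rewrite oppr_ge0 Dg.
  move/eqP: lgg; rewrite mulf_eq0 (negPf gn0) orbF => /eqP ->.
  by rewrite mul0r.
have Sh : \sum_(i < nh) lh i * 'd (h i) zbar d = 0.
  by apply: big1 => i _; rewrite Dh mulr0.
have SG : 0 <= \sum_(i in alpha_set G H zbar :|: beta_set G H zbar)
             lG i * 'd (G i) zbar d.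
  apply: sumr_ge0 => i; rewrite !inE => /orP [/andP [/eqP g0 hpos]|/andP [/eqP g0 /eqP h0]].
    by rewrite DGa ?mulr0.
  case: (eqVneq ('d (G i) zbar d) 0) => [->|ne]; first by rewrite mulr0.
  apply: mulr_ge0; last exact: DGge.
  by apply: Hb2; rewrite !inE g0 h0 !eqxx ne.
have SH : 0 <= \sum_(i in gamma_set G H zbar :|: beta_set G H zbar)
             lH i * 'd (H i) zbar d.
  apply: sumr_ge0 => i; rewrite !inE => /orP [/andP [gpos /eqP h0]|/andP [/eqP g0 /eqP h0]].
    by rewrite DHg ?mulr0.
  case: (eqVneq ('d (G i) zbar d) 0) => [e|ne].
    apply: mulr_ge0; last exact: DHge.
    by apply: Hb1; rewrite !inE g0 h0 e !eqxx.
  move/eqP: (DGH i g0 h0); rewrite mulf_eq0 (negPf ne) /= => /eqP ->.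
  by rewrite mulr0.
exact: final_ineq E Sg Sh SG SH.
Unshelve. all: by end_near.
Qed.
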